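(* Let $(\omega,\rho)$ be a half-flat ${\rm SU}(3)$-structure on the Lie algebra $\mathfrak g=\mathfrak h_3\oplus\mathfrak h_3$ (i.e. a compatible normalised pair of stable forms on $\mathfrak g$ with positive definite induced metric, $d\rho=0$ and $d(\omega^2)=0$). Then $\omega(\mathfrak z,\mathfrak z)\neq0$, where $\mathfrak z$ is the centre of $\mathfrak g$. In particular there is a standard basis in which $\omega$ is a nonzero multiple of $e^1\wedge f^1+e^2\wedge f^2+e^3\wedge f^3$.
   Context: A standard basis of $\mathfrak h_3\oplus\mathfrak h_3$ ($\mathfrak h_3$ the three-dimensional Heisenberg algebra) is a basis $e_1,e_2,e_3,f_1,f_2,f_3$ with dual basis $e^1,\dots,f^3$ such that $de^3=e^1\wedge e^2$, $df^3=f^1\wedge f^2$, all other basis one-forms closed; the centre is $\mathrm{span}\{e_3,f_3\}$. For a stable three-form $\rho$ on an oriented six-dimensional space: $K_\rho(v)=\kappa((v\lrcorner\rho)\wedge\rho)$, $\lambda(\rho)=\frac16\mathrm{tr}K_\rho^2$, $J_\rho=K_\rho/\sqrt{|\lambda(\rho)|}$. A compatible normalised pair $(\omega,\rho)$: $\omega$ nondegenerate, $\rho$ stable, $\omega\wedge\rho=0$, $J_\rho^*\rho\wedge\rho=\frac23\omega^3$ (orientation by $\omega^3$); its induced metric is $\varepsilon\omega(\cdot,J_\rho\cdot)$, $\varepsilon=\mathrm{sign}\lambda(\rho)$; it is an ${\rm SU}(3)$-structure iff this metric is positive definite. *)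

(* Defs.v *)
(* Coordinates on g = h3 (+) h3 w.r.t. a fixed
   standard basis e1,e2,e3,f1,f2,f3, indexed 0,1,2,3,4,5.  A vector is a map
   nat -> R (only indices < 6 matter); a k-form is given by its components
   alpha [i1;...;ik] = alpha(e_i1,...,e_ik) : a map list nat -> R. *)
From Stdlib Require Import Reals List Arith.
Import ListNotations.
Open Scope R_scope.

Definition vec := nat -> R.
Definition form := list nat -> R.

Fixpoint sumL (f : list nat -> R) (L : list (list nat)) : R :=
  match L with nil => 0 | ix :: L' => f ix + sumL f L' end.
Definition sumN (f : nat -> R) (n : nat) : R :=
  fold_right (fun a acc => f a + acc) 0 (seq 0 n).
Definition sum6 (f : nat -> R) : R :=
  f 0%nat + f 1%nat + f 2%nat + f 3%nat + f 4%nat + f 5%nat.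

Fixpoint tuples (n m : nat) : list (list nat) :=
  match n with
  | O => [nil]
  | S n' => flat_map (fun i => map (cons i) (tuples n' m)) (seq 0 m)
  end.

(* Levi-Civita symbol of a list: sign of the permutation (via inversions),
   0 if an entry is repeated *)
Definition cmp (a b : nat) : R :=
  if Nat.ltb a b then 1 else if Nat.ltb b a then -1 else 0.
Fixpoint eps (l : list nat) : R :=
  match l with
  | nil => 1
  | a :: l' => fold_right (fun b acc => cmp a b * acc) 1 l' * eps l'
  end.

Definition valid (k : nat) (ix : list nat) : Prop :=
  length ix = k /\ Forall (fun i => (i < 6)%nat) ix.

Definition alternating (k : nat) (alpha : form) : Prop :=
  forall l1 a b l2, valid k (l1 ++ a :: b :: l2) ->
    alpha (l1 ++ b :: a :: l2) = - alpha (l1 ++ a :: b :: l2).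

(* wedge product of a p-form and a q-form (determinant convention,
   e^1 /\ e^2 (e_1,e_2) = 1) *)
Definition wedge (p q : nat) (alpha beta : form) : form := fun ix =>
  / INR (fact p * fact q) *
  sumL (fun s => eps s
          * alpha (map (fun k => nth k ix 0%nat) (firstn p s))
          * beta (map (fun k => nth k ix 0%nat) (skipn p s)))
       (tuples (p + q) (p + q)).

Definition zero_form : form := fun _ => 0.
Definition oneform (q : nat -> R) : form :=
  fun ix => match ix with [j] => q j | _ => 0 end.
Definition basis1 (i : nat) : form :=
  oneform (fun j => if Nat.eqb j i then 1 else 0).

(* structure equations of h3 (+) h3: de^3 = e^1/\e^2, df^3 = f^1/\f^2 *)
Definition de (m : nat) : form :=
  if Nat.eqb m 2 then wedge 1 1 (basis1 0) (basis1 1)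
  else if Nat.eqb m 5 then wedge 1 1 (basis1 3) (basis1 4)
  else zero_form.

(* Lie bracket, determined by d alpha (x,y) = - alpha([x,y]) *)
Definition struct_const (m p q : nat) : R := - de m [p; q].
Definition bracket (x y : vec) : vec := fun m =>
  sum6 (fun p => sum6 (fun q => struct_const m p q * x p * y q)).

Fixpoint remove_at (n : nat) (l : list nat) : list nat :=
  match l, n with
  | nil, _ => nil
  | _ :: l', O => l'
  | a :: l', S n' => a :: remove_at n' l'
  end.

(* Chevalley-Eilenberg differential on forms on g:
   d alpha (x0,..,xk) = sum_{a<b} (-1)^(a+b) alpha([xa,xb], x0,..^..^..,xk) *)
Definition dform (alpha : form) : form := fun ix =>
  sumN (fun a => sumN (fun b =>
     if Nat.ltb a b then
       (-1) ^ (a + b) * sum6 (fun m =>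
          struct_const m (nth a ix 0%nat) (nth b ix 0%nat)
          * alpha (m :: remove_at a (remove_at b ix)))
     else 0) (length ix)) (length ix).

Definition interior (v : vec) (alpha : form) : form :=
  fun ix => sum6 (fun i => v i * alpha (i :: ix)).
Definition form_eval2 (omega : form) (x y : vec) : R :=
  sum6 (fun i => sum6 (fun j => x i * y j * omega [i; j])).
Definition unitvec (j : nat) : vec := fun k => if Nat.eqb k j then 1 else 0.

Definition top : list nat := [0; 1; 2; 3; 4; 5]%nat.
Definition omega3 (omega : form) : form := wedge 4 2 (wedge 2 2 omega omega) omega.

(* kappa : Lambda^5 -> V (x) Lambda^6, relative to the volume form
   nu = nu0 e^{123} /\ f^{123}: kappa(eta) = u with u _| nu = eta *)
Definition kappa (nu0 : R) (eta : form) : vec := fun i =>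
  / (INR (fact 5) * nu0) * sumL (fun J => eps (i :: J) * eta J) (tuples 5 6).

(* matrix of K_rho (column j = K_rho(e_j)), relative to volume nu0 *)
Definition Kmat (nu0 : R) (rho : form) (i j : nat) : R :=
  kappa nu0 (wedge 2 3 (interior (unitvec j) rho) rho) i.
Definition lambda (nu0 : R) (rho : form) : R :=
  / 6 * sum6 (fun i => sum6 (fun j => Kmat nu0 rho i j * Kmat nu0 rho j i)).

(* stability: lambda(rho) <> 0 (w.r.t. any volume form; we use e^{123}/\f^{123}) *)
Definition stable (rho : form) : Prop := lambda 1 rho <> 0.

(* J_rho, with the orientation/volume form given by omega^3 *)
Definition Jmat (omega rho : form) (i j : nat) : R :=
  let nu0 := omega3 omega top in
  Kmat nu0 rho i j / sqrt (Rabs (lambda nu0 rho)).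
Definition applyJ (omega rho : form) (y : vec) : vec :=
  fun i => sum6 (fun j => Jmat omega rho i j * y j).

Definition Jpull (omega rho : form) : form := fun ix =>
  match ix with
  | [i1; i2; i3] =>
      sum6 (fun a => sum6 (fun b => sum6 (fun c =>
        Jmat omega rho a i1 * Jmat omega rho b i2 * Jmat omega rho c i3
        * rho [a; b; c])))
  | _ => 0
  end.

Definition sign_lambda (omega rho : form) : R :=
  if Rlt_dec 0 (lambda (omega3 omega top) rho) then 1 else -1.

Definition induced_metric (omega rho : form) (x y : vec) : R :=
  sign_lambda omega rho * form_eval2 omega x (applyJ omega rho y).

Definition nondegenerate (omega : form) : Prop :=
  forall x : vec, (forall y : vec, form_eval2 omega x y = 0) ->
    forall i, (i < 6)%nat -> x i = 0.

Definition compatible_normalised_pair (omega rho : form) : Prop :=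
  alternating 2 omega /\ alternating 3 rho /\
  nondegenerate omega /\ stable rho /\
  (forall ix, valid 5 ix -> wedge 2 3 omega rho ix = 0) /\
  wedge 3 3 (Jpull omega rho) rho top = 2 / 3 * omega3 omega top.

Definition SU3_structure (omega rho : form) : Prop :=
  compatible_normalised_pair omega rho /\
  forall x : vec, (exists i, (i < 6)%nat /\ x i <> 0) ->
    induced_metric omega rho x x > 0.

Definition half_flat (omega rho : form) : Prop :=
  SU3_structure omega rho /\
  (forall ix, valid 4 ix -> dform rho ix = 0) /\
  (forall ix, valid 5 ix -> dform (wedge 2 2 omega omega) ix = 0).

Definition in_centre (z : vec) : Prop :=
  forall (x : vec) (i : nat), (i < 6)%nat -> bracket z x i = 0.

(* A standard basis: basis vectors e'_a = sum_i P i a e_i, dual basis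
   one-forms theta_k = sum_i Q k i e^i, satisfying the structure equations
   d theta_2 = theta_0/\theta_1, d theta_5 = theta_3/\theta_4, others closed. *)
Definition standard_basis (Q P : nat -> nat -> R) : Prop :=
  (forall k a, (k < 6)%nat -> (a < 6)%nat ->
     sum6 (fun i => Q k i * P i a) = if Nat.eqb k a then 1 else 0) /\
  (forall k ix, (k < 6)%nat -> valid 2 ix ->
     dform (oneform (Q k)) ix =
     (if Nat.eqb k 2 then wedge 1 1 (oneform (Q 0%nat)) (oneform (Q 1%nat))
      else if Nat.eqb k 5 then wedge 1 1 (oneform (Q 3%nat)) (oneform (Q 4%nat))
      else zero_form) ix).

(* Main.v *)
Require Import Defs.
From Stdlib Require Import Reals List Lra Lia.
Import ListNotations.
Open Scope R_scope.

Lemma tuples_in n m l : In l (tuples n m) -> length l = n /\ Forall (fun i => (i < m)%nat) l.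
Proof.
  revert l; induction n; intros l H; simpl in H.
  - destruct H as [<-|[]]. split; auto.
  - apply in_flat_map in H. destruct H as [i [Hi Hl]].
    apply in_map_iff in Hl. destruct Hl as [l' [<- Hl']].
    apply in_seq in Hi. destruct (IHn l' Hl'). split. simpl; auto. constructor; auto; lia.
Qed.

Lemma fold0 a l : In a l -> fold_right (fun b acc => cmp a b * acc) 1 l = 0.
Proof.
  induction l as [|b l IH]; simpl; intros H; [destruct H|].
  destruct H as [->|H].
  - unfold cmp. rewrite Nat.ltb_irrefl. ring.
  - rewrite IH; auto. ring.
Qed.

Lemma eps_nodup l : eps l <> 0 -> NoDup l.
Proof.
  induction l as [|a l IH]; simpl; intros H; constructor.
  - intro Hin. apply H. rewrite fold0; auto. ring.
  - apply IH. intro E. apply H. rewrite E. ring.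
Qed.

Lemma sumL_zero f L : (forall x, In x L -> f x = 0) -> sumL f L = 0.
Proof.
  induction L; simpl; intros H; auto. rewrite H, IHL; auto. ring.
Qed.

Lemma cover s n : NoDup s -> length s = n -> Forall (fun i => (i < n)%nat) s ->
  forall k, (k < n)%nat -> In k s.
Proof.
  intros Hn Hl Hf k Hk.
  assert (incl (seq 0 n) s).
  { apply NoDup_length_incl; auto. rewrite length_seq; lia.
    intros x Hx. rewrite Forall_forall in Hf. apply in_seq. specialize (Hf x Hx). lia. }
  apply H. apply in_seq. lia.
Qed.

Lemma valid3 a b c : (a < 6)%nat -> (b < 6)%nat -> (c < 6)%nat -> valid 3 [a;b;c].
Proof. intros. split; [reflexivity|]. repeat (apply Forall_cons; [lia|]). apply Forall_nil. Qed.

Section A.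
Variable r : form.
Hypothesis Hr : alternating 3 r.

Lemma sw12 a b c : (a < 6)%nat -> (b < 6)%nat -> (c < 6)%nat -> r [a;b;c] = - r [b;a;c].
Proof. intros. pose proof (Hr [] a b [c]) as H2. simpl in H2. rewrite H2. ring. apply valid3; auto. Qed.
Lemma sw23 a b c : (a < 6)%nat -> (b < 6)%nat -> (c < 6)%nat -> r [a;b;c] = - r [a;c;b].
Proof. intros. pose proof (Hr [a] b c []) as H2. simpl in H2. rewrite H2. ring. apply valid3; auto. Qed.
Lemma eq12 a c : (a < 6)%nat -> (c < 6)%nat -> r [a;a;c] = 0.
Proof. intros. pose proof (Hr [] a a [c]) as H1. simpl in H1. assert (r [a;a;c] = - r [a;a;c]). apply H1. apply valid3; auto. lra. Qed.
Lemma eq23 a c : (a < 6)%nat -> (c < 6)%nat -> r [c;a;a] = 0.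
Proof. intros. pose proof (Hr [c] a a []) as H1. simpl in H1. assert (r [c;a;a] = - r [c;a;a]). apply H1. apply valid3; auto. lra. Qed.
Lemma eq13 a c : (a < 6)%nat -> (c < 6)%nat -> r [a;c;a] = 0.
Proof. intros. rewrite sw23 by auto. rewrite eq12 by auto. ring. Qed.

Lemma D3 a b c : (a < 6)%nat -> (b < 6)%nat -> (c < 6)%nat ->
  (a = b \/ b = c \/ a = c) -> r [a;b;c] = 0.
Proof. intros ? ? ? [->|[->| ->]]; [apply eq12|apply eq23|apply eq13]; auto. Qed.

Hypothesis H25 : forall k, (k < 6)%nat -> r [2;5;k]%nat = 0.

Lemma V3 a b c : (a < 6)%nat -> (b < 6)%nat -> (c < 6)%nat ->
  (a = 2 \/ b = 2 \/ c = 2)%nat -> (a = 5 \/ b = 5 \/ c = 5)%nat -> r [a;b;c] = 0.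
Proof.
  intros Ha Hb Hc H2 H5.
  destruct H2 as [->|[->| ->]]; destruct H5 as [E|[E|E]]; try lia; subst.
  - apply H25; auto.
  - rewrite sw23 by lia. rewrite H25 by lia. ring.
  - rewrite sw12 by lia. rewrite H25 by lia. ring.
  - rewrite sw12 by lia. rewrite sw23 by lia. rewrite H25 by lia. ring.
  - rewrite sw23 by lia. rewrite sw12 by lia. rewrite H25 by lia. ring.
  - rewrite sw23 by lia. rewrite sw12 by lia. rewrite sw23 by lia. rewrite H25 by lia. ring.
Qed.

Lemma alpha_eq (ix : list nat) : Defs.interior (unitvec 2) r ix = r (2%nat :: ix).
Proof. unfold Defs.interior, sum6, unitvec. simpl. ring. Qed.

Lemma nth_lt (J : list nat) p : length J = 5%nat -> Forall (fun i => (i < 6)%nat) J -> (nth p J 0 < 6)%nat.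
Proof.
  intros Hl Hf. destruct (Nat.lt_ge_cases p 5).
  - rewrite Forall_forall in Hf. apply Hf. apply nth_In. lia.
  - rewrite nth_overflow by lia. lia.
Qed.

Lemma eta_zero J : length J = 5%nat -> Forall (fun i => (i < 6)%nat) J ->
  In 2%nat J -> In 5%nat J -> wedge 2 3 (Defs.interior (unitvec 2) r) r J = 0.
Proof.
  intros Hl Hf I2 I5. unfold wedge. rewrite sumL_zero. ring.
  intros s Hs. apply tuples_in in Hs. destruct Hs as [Hsl Hsf].
  destruct (Req_dec (eps s) 0) as [E|E]. rewrite E; ring.
  pose proof (eps_nodup _ E) as Hnd.
  pose proof (cover s 5 Hnd Hsl Hsf) as Hcov.
  apply In_nth with (d := 0%nat) in I2. destruct I2 as [p2 [Hp2 E2]].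
  apply In_nth with (d := 0%nat) in I5. destruct I5 as [p5 [Hp5 E5]].
  rewrite Hl in Hp2, Hp5. apply Hcov in Hp2. apply Hcov in Hp5.
  destruct s as [|s0 [|s1 [|s2 [|s3 [|s4 [|]]]]]]; simpl in Hsl; try lia.
  simpl. rewrite alpha_eq.
  pose proof (nth_lt J s0 Hl Hf). pose proof (nth_lt J s1 Hl Hf). pose proof (nth_lt J s2 Hl Hf).
  pose proof (nth_lt J s3 Hl Hf). pose proof (nth_lt J s4 Hl Hf).
  simpl in Hp2, Hp5.
  destruct (Nat.eq_dec (nth s0 J 0%nat) 2) as [F|F].
  { rewrite (D3 2 (nth s0 J 0%nat) (nth s1 J 0%nat)); try lia. ring. }
  destruct (Nat.eq_dec (nth s1 J 0%nat) 2) as [F'|F'].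
  { rewrite (D3 2 (nth s0 J 0%nat) (nth s1 J 0%nat)); try lia. ring. }
  destruct (Nat.eq_dec (nth s0 J 0%nat) 5) as [G|G].
  { rewrite (V3 2 (nth s0 J 0%nat) (nth s1 J 0%nat)); try lia. ring. }
  destruct (Nat.eq_dec (nth s1 J 0%nat) 5) as [G'|G'].
  { rewrite (V3 2 (nth s0 J 0%nat) (nth s1 J 0%nat)); try lia. ring. }
  rewrite (V3 (nth s2 J 0%nat) (nth s3 J 0%nat) (nth s4 J 0%nat)); try lia. ring.
  - destruct Hp2 as [<-|[<-|[<-|[<-|[<-|[]]]]]]; lia.
  - destruct Hp5 as [<-|[<-|[<-|[<-|[<-|[]]]]]]; lia.
Qed.

Lemma K_zero nu0 i : (i < 6)%nat -> i <> 2%nat -> i <> 5%nat -> Kmat nu0 r i 2 = 0.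
Proof.
  intros Hi H2 H5. unfold Kmat, kappa. rewrite sumL_zero. ring.
  intros J HJ. apply tuples_in in HJ. destruct HJ as [Hl Hf].
  destruct (Req_dec (eps (i :: J)) 0) as [E|E]. rewrite E; ring.
  pose proof (eps_nodup _ E) as Hnd.
  assert (Hc := cover (i :: J) 6 Hnd ltac:(simpl; lia) ltac:(constructor; auto)).
  rewrite eta_zero; auto. ring.
  - destruct (Hc 2%nat ltac:(lia)) as [->|]; [lia|auto].
  - destruct (Hc 5%nat ltac:(lia)) as [->|]; [lia|auto].
Qed.
End A.

Ltac norm3 r Hr :=
  repeat match goal with
  | |- context [r [?a;?a;?c]] => rewrite (eq12 r Hr a c) by lia
  | |- context [r [?c;?a;?a]] => rewrite (eq23 r Hr a c) by lia
  | |- context [r [?a;?c;?a]] => rewrite (eq13 r Hr a c) by lia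
  | |- context [r [?a;?b;?c]] =>
      lazymatch eval vm_compute in (Nat.ltb b a) with
      | true => rewrite (sw12 r Hr a b c) by lia
      | false => lazymatch eval vm_compute in (Nat.ltb c b) with
         | true => rewrite (sw23 r Hr a b c) by lia
         end
      end
  end.

Ltac crunch := unfold dform, sumN, sum6, struct_const, de, wedge, basis1, oneform, zero_form, cmp; simpl; unfold cmp; simpl.

Lemma validn (l : list nat) n : length l = n -> forallb (fun i => Nat.ltb i 6) l = true -> valid n l.
Proof. intros H1 H2. split; auto. rewrite Forall_forall. rewrite forallb_forall in H2.
  intros x Hx. apply Nat.ltb_lt. auto. Qed.

Lemma rho25 r (Hr : alternating 3 r) (Hd : forall ix, valid 4 ix -> dform r ix = 0) :
  forall k, (k < 6)%nat -> r [2;5;k]%nat = 0.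
Proof.
  intros k Hk.
  destruct k as [|[|[|[|[|[|k]]]]]]; try lia.
  - pose proof (Hd [3;4;2;0]%nat (validn [3;4;2;0]%nat 4 eq_refl eq_refl)) as H. revert H. crunch. norm3 r Hr. intro H. lra.
  - pose proof (Hd [3;4;2;1]%nat (validn [3;4;2;1]%nat 4 eq_refl eq_refl)) as H. revert H. crunch. norm3 r Hr. intro H. lra.
  - apply (eq13 r Hr); lia.
  - pose proof (Hd [0;1;5;3]%nat (validn [0;1;5;3]%nat 4 eq_refl eq_refl)) as H. revert H. crunch. norm3 r Hr. intro H. lra.
  - pose proof (Hd [0;1;5;4]%nat (validn [0;1;5;4]%nat 4 eq_refl eq_refl)) as H. revert H. crunch. norm3 r Hr. intro H. lra.
  - apply (eq23 r Hr); lia.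
Qed.

Lemma valid2 a b : (a < 6)%nat -> (b < 6)%nat -> valid 2 [a;b].
Proof. intros. split; [reflexivity|]. repeat (apply Forall_cons; [lia|]). apply Forall_nil. Qed.
Section B.
Variable w : form.
Hypothesis Hw : alternating 2 w.
Lemma sw2 a b : (a < 6)%nat -> (b < 6)%nat -> w [a;b] = - w [b;a].
Proof. intros. pose proof (Hw [] a b []) as H2. simpl in H2. rewrite H2. ring. apply valid2; auto. Qed.
Lemma eq2 a : (a < 6)%nat -> w [a;a] = 0.
Proof. intros. pose proof (Hw [] a a []) as H1. simpl in H1. assert (w [a;a] = - w [a;a]). apply H1. apply valid2; auto. lra. Qed.
End B.

Ltac norm2 r Hr :=
  repeat match goal with
  | |- context [r [?a;?a]] => rewrite (eq2 r Hr a) by lia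
  | |- context [r [?a;?b]] =>
      lazymatch eval vm_compute in (Nat.ltb b a) with
      | true => rewrite (sw2 r Hr a b) by lia
      end
  end.

Lemma omega25 omega rho : half_flat omega rho -> omega [2;5]%nat <> 0.
Proof.
  intros [[[Ha2 [Ha3 [Hnd [Hst [Hwr Hnorm]]]]] Hpos] [Hdr Hdw]] E.
  pose proof (rho25 rho Ha3 Hdr) as H25.
  assert (HJ : forall j, (j < 6)%nat -> j <> 2%nat -> j <> 5%nat -> Jmat omega rho j 2 = 0).
  { intros j ? ? ?. unfold Jmat. cbv zeta. rewrite (K_zero rho Ha3 H25); auto. unfold Rdiv; ring. }
  assert (Hx : exists i, (i < 6)%nat /\ unitvec 2 i <> 0).
  { exists 2%nat. split. lia. unfold unitvec. simpl. lra. }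
  specialize (Hpos _ Hx). unfold induced_metric in Hpos.
  Opaque Jmat.
  unfold form_eval2, applyJ, sum6, unitvec in Hpos. simpl in Hpos.
  rewrite E in Hpos. rewrite (eq2 omega Ha2 2) in Hpos by lia.
  try rewrite (HJ 0%nat) in Hpos by lia; try rewrite (HJ 1%nat) in Hpos by lia;
  try rewrite (HJ 3%nat) in Hpos by lia; try rewrite (HJ 4%nat) in Hpos by lia.
  Transparent Jmat.
  lra.
Qed.

Lemma dW1 (a : form) : dform a [0;1;3;4;5]%nat = a [2;3;4;5]%nat + a [5;0;1;5]%nat.
Proof. crunch. field. Qed.
Lemma dW2 (a : form) : dform a [0;1;2;3;4]%nat = a [2;2;3;4]%nat + a [5;0;1;2]%nat.
Proof. crunch. field. Qed.

Lemma pfs w (Hw : alternating 2 w) (Hd : forall ix, valid 5 ix -> dform (wedge 2 2 w w) ix = 0) :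
  w [0;1]%nat * w[2;5]%nat - w[0;2]%nat * w[1;5]%nat + w[0;5]%nat * w[1;2]%nat = 0 /\
  w [2;3]%nat * w[4;5]%nat - w[2;4]%nat * w[3;5]%nat + w[2;5]%nat * w[3;4]%nat = 0.
Proof.
  split.
  - pose proof (Hd [0;1;2;3;4]%nat (validn [0;1;2;3;4]%nat 5 eq_refl eq_refl)) as H.
    rewrite dW2 in H. revert H. crunch. norm2 w Hw. intro H. field_simplify in H. lra.
  - pose proof (Hd [0;1;3;4;5]%nat (validn [0;1;3;4;5]%nat 5 eq_refl eq_refl)) as H.
    rewrite dW1 in H. revert H. crunch. norm2 w Hw. intro H. field_simplify in H. lra.
Qed.

Section Basis.
Variable om : form.
Definition o (i j : nat) := om [i;j].
Definition ww := o 2 5.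
Definition s1 := - o 0 5 / ww.
Definition t1 := o 0 2 / ww.
Definition s2 := - o 1 5 / ww.
Definition t2 := o 1 2 / ww.
Definition al3 := - o 3 5 / ww.
Definition be3 := - o 2 3 / ww.
Definition al4 := - o 4 5 / ww.
Definition be4 := - o 2 4 / ww.
Definition M00 := o 0 3 + s1 * o 2 3 - t1 * o 3 5.
Definition M01 := o 0 4 + s1 * o 2 4 - t1 * o 4 5.
Definition M10 := o 1 3 + s2 * o 2 3 - t2 * o 3 5.
Definition M11 := o 1 4 + s2 * o 2 4 - t2 * o 4 5.
Definition detM := M00 * M11 - M01 * M10.
Definition B33 := M11 / ww.
Definition B34 := - M01 / ww.
Definition B43 := - M10 / ww.
Definition B44 := M00 / ww.
Definition DD := B33 * B44 - B34 * B43.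
Definition u3 := B33 * al3 + B43 * al4.
Definition v3 := B33 * be3 + B43 * be4.
Definition u4 := B34 * al3 + B44 * al4.
Definition v4 := B34 * be3 + B44 * be4.
Definition Q33 := B44 / DD.
Definition Q34 := - B34 / DD.
Definition Q43 := - B43 / DD.
Definition Q44 := B33 / DD.
Definition cc := detM / ww.
Definition N00 := o 0 3 * ww - o 0 5 * o 2 3 - o 0 2 * o 3 5.
Definition N01 := o 0 4 * ww - o 0 5 * o 2 4 - o 0 2 * o 4 5.
Definition N10 := o 1 3 * ww - o 1 5 * o 2 3 - o 1 2 * o 3 5.
Definition N11 := o 1 4 * ww - o 1 5 * o 2 4 - o 1 2 * o 4 5.
Definition NN := N00 * N11 - N01 * N10.

Definition Pm (i a : nat) : R :=
  match a, i with
  | 0,0 => 1 | 0,2 => s1 | 0,5 => t1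
  | 1,1 => 1 | 1,2 => s2 | 1,5 => t2
  | 2,2 => 1
  | 3,3 => B33 | 3,4 => B43 | 3,2 => u3 | 3,5 => v3
  | 4,3 => B34 | 4,4 => B44 | 4,2 => u4 | 4,5 => v4
  | 5,5 => DD
  | _,_ => 0 end.

Definition Qm (k i : nat) : R :=
  match k, i with
  | 0,0 => 1
  | 1,1 => 1
  | 2,0 => - s1 | 2,1 => - s2 | 2,2 => 1
  | 2,3 => - (u3 * Q33 + u4 * Q43) | 2,4 => - (u3 * Q34 + u4 * Q44)
  | 3,3 => Q33 | 3,4 => Q34
  | 4,3 => Q43 | 4,4 => Q44
  | 5,0 => - t1 / DD | 5,1 => - t2 / DD | 5,5 => 1 / DD
  | 5,3 => - (v3 * Q33 + v4 * Q43) / DD | 5,4 => - (v3 * Q34 + v4 * Q44) / DD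
  | _,_ => 0 end.
End Basis.

Ltac unf := unfold Qm, Pm, Q33, Q34, Q43, Q44, u3, u4, v3, v4, DD, B33, B34, B43, B44,
  cc, detM, M00, M01, M10, M11, al3, al4, be3, be4, s1, s2, t1, t2, ww, o.

Lemma NN_nz om (Hw : om [2;5]%nat <> 0) (Hd : detM om <> 0) : NN om <> 0.
Proof.
  assert (E : detM om = NN om / (ww om * ww om)).
  { unfold NN, N00, N01, N10, N11. unf. field. auto. }
  intro C. apply Hd. rewrite E, C. unfold Rdiv. ring.
Qed.

Ltac side Hw HN := unfold NN, N00, N01, N10, N11, ww, o in HN; repeat split; auto; intro Hc; apply HN; lra.

Lemma QP om (Hw : om [2;5]%nat <> 0) (Hd : detM om <> 0) k a : (k < 6)%nat -> (a < 6)%nat ->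
  sum6 (fun i => Qm om k i * Pm om i a) = if Nat.eqb k a then 1 else 0.
Proof.
  intros Hk Ha. pose proof (NN_nz om Hw Hd) as HN. unfold sum6.
  destruct k as [|[|[|[|[|[|k]]]]]]; try lia; destruct a as [|[|[|[|[|[|a]]]]]]; try lia;
  simpl; unf; field; side Hw HN.
Qed.

Lemma valid2_inv ix : valid 2 ix -> exists i j, ix = [i;j] /\ (i < 6)%nat /\ (j < 6)%nat.
Proof.
  intros [Hl Hf]. destruct ix as [|i [|j [|]]]; simpl in Hl; try lia.
  inversion Hf; subst. inversion H2; subst. eauto.
Qed.

Lemma SE om (Hw : om [2;5]%nat <> 0) (Hd : detM om <> 0) k ix : (k < 6)%nat -> valid 2 ix ->
     dform (oneform (Qm om k)) ix =
     (if Nat.eqb k 2 then wedge 1 1 (oneform (Qm om 0%nat)) (oneform (Qm om 1%nat))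
      else if Nat.eqb k 5 then wedge 1 1 (oneform (Qm om 3%nat)) (oneform (Qm om 4%nat))
      else zero_form) ix.
Proof.
  intros Hk Hv. pose proof (NN_nz om Hw Hd) as HN.
  destruct (valid2_inv ix Hv) as [i [j [-> [Hi Hj]]]].
  destruct k as [|[|[|[|[|[|k]]]]]]; try lia;
  destruct i as [|[|[|[|[|[|i]]]]]]; try lia; destruct j as [|[|[|[|[|[|j]]]]]]; try lia;
  crunch; unf; field; side Hw HN.
Qed.

Lemma OM om (Ha : alternating 2 om) (Hw : om [2;5]%nat <> 0) (Hd : detM om <> 0)
  (E01 : om [0;1]%nat = (om [0;2]%nat * om [1;5]%nat - om [0;5]%nat * om [1;2]%nat) / om [2;5]%nat)
  (E34 : om [3;4]%nat = (om [2;4]%nat * om [3;5]%nat - om [2;3]%nat * om [4;5]%nat) / om [2;5]%nat)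
  ix : valid 2 ix ->
       om ix = cc om * (wedge 1 1 (oneform (Qm om 0%nat)) (oneform (Qm om 3%nat)) ix
                      + wedge 1 1 (oneform (Qm om 1%nat)) (oneform (Qm om 4%nat)) ix
                      + wedge 1 1 (oneform (Qm om 2%nat)) (oneform (Qm om 5%nat)) ix).
Proof.
  intros Hv. pose proof (NN_nz om Hw Hd) as HN.
  destruct (valid2_inv ix Hv) as [i [j [-> [Hi Hj]]]].
  destruct i as [|[|[|[|[|[|i]]]]]]; try lia; destruct j as [|[|[|[|[|[|j]]]]]]; try lia;
  crunch; norm2 om Ha; rewrite ?E01, ?E34; unf; field; side Hw HN.
Qed.

Lemma fe_sum om (x y : vec) : form_eval2 om x y = sum6 (fun j => y j * sum6 (fun i => x i * om [i;j])).
Proof. unfold form_eval2, sum6. ring. Qed.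

Lemma Gnd om (Ha : alternating 2 om) (Hw : om [2;5]%nat <> 0) (Hnd : nondegenerate om)
  (E01 : om [0;1]%nat = (om [0;2]%nat * om [1;5]%nat - om [0;5]%nat * om [1;2]%nat) / om [2;5]%nat)
  a1 a2 : a1 * M00 om + a2 * M10 om = 0 -> a1 * M01 om + a2 * M11 om = 0 -> a1 = 0 /\ a2 = 0.
Proof.
  intros H3 H4.
  set (x := fun k => a1 * Pm om k 0 + a2 * Pm om k 1).
  assert (C : forall j, (j < 6)%nat -> sum6 (fun i => x i * om [i;j]) = 0).
  { intros j Hj. destruct j as [|[|[|[|[|[|j]]]]]]; try lia.
    - unfold sum6, x. simpl. norm2 om Ha. rewrite ?E01. unf. field. auto.
    - unfold sum6, x. simpl. norm2 om Ha. rewrite ?E01. unf. field. auto.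
    - unfold sum6, x. simpl. norm2 om Ha. unf. field. auto.
    - rewrite <- H3. unfold sum6, x. simpl. norm2 om Ha. unf. field. auto.
    - rewrite <- H4. unfold sum6, x. simpl. norm2 om Ha. unf. field. auto.
    - unfold sum6, x. simpl. norm2 om Ha. unf. field. auto. }
  assert (Z : forall y, form_eval2 om x y = 0).
  { intro y. rewrite fe_sum. unfold sum6 at 1. rewrite !C by lia. ring. }
  pose proof (Hnd x Z 0%nat ltac:(lia)) as X0. pose proof (Hnd x Z 1%nat ltac:(lia)) as X1.
  unfold x in X0, X1. simpl in X0, X1. split; lra.
Qed.

Lemma detM_nz om (Ha : alternating 2 om) (Hw : om [2;5]%nat <> 0) (Hnd : nondegenerate om)
  (E01 : om [0;1]%nat = (om [0;2]%nat * om [1;5]%nat - om [0;5]%nat * om [1;2]%nat) / om [2;5]%nat) :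
  detM om <> 0.
Proof.
  intro D. unfold detM in D.
  pose proof (Gnd om Ha Hw Hnd E01) as G.
  destruct (Req_dec (M10 om) 0) as [Z1|Z1]; [destruct (Req_dec (M00 om) 0) as [Z2|Z2]|].
  - destruct (Req_dec (M11 om) 0) as [Z3|Z3]; [destruct (Req_dec (M01 om) 0) as [Z4|Z4]|].
    + destruct (G 1 0); [rewrite Z2; ring|rewrite Z4; ring|lra].
    + destruct (G (M11 om) (- M01 om)); [rewrite Z1, Z2; ring| ring |lra].
    + destruct (G (M11 om) (- M01 om)); [rewrite Z1, Z2; ring| ring |lra].
  - destruct (G (M10 om) (- M00 om)); [ring| lra |lra].
  - destruct (G (M10 om) (- M00 om)); [ring| lra |lra].
Qed.

Theorem lemma4p6 (omega rho : form) :
  half_flat omega rho ->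
  (exists z1 z2 : vec, in_centre z1 /\ in_centre z2 /\
     form_eval2 omega z1 z2 <> 0) /\
  (exists (Q P : nat -> nat -> R) (c : R),
     standard_basis Q P /\ c <> 0 /\
     forall ix, valid 2 ix ->
       omega ix = c * (wedge 1 1 (oneform (Q 0%nat)) (oneform (Q 3%nat)) ix
                      + wedge 1 1 (oneform (Q 1%nat)) (oneform (Q 4%nat)) ix
                      + wedge 1 1 (oneform (Q 2%nat)) (oneform (Q 5%nat)) ix)).
Proof.
  intros H. pose proof (omega25 _ _ H) as Hw.
  destruct H as [[[Ha2 [Ha3 [Hnd [Hst [Hwr Hnorm]]]]] Hpos] [Hdr Hdw]].
  split.
  - exists (unitvec 2), (unitvec 5). split; [|split].
    + intros x i Hi. unfold bracket. destruct i as [|[|[|[|[|[|i]]]]]]; try lia;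
      unfold sum6, struct_const, de, wedge, basis1, oneform, zero_form, unitvec, cmp; simpl; unfold cmp; simpl; field.
    + intros x i Hi. unfold bracket. destruct i as [|[|[|[|[|[|i]]]]]]; try lia;
      unfold sum6, struct_const, de, wedge, basis1, oneform, zero_form, unitvec, cmp; simpl; unfold cmp; simpl; field.
    + assert (E : form_eval2 omega (unitvec 2) (unitvec 5) = omega [2;5]%nat).
      { unfold form_eval2, sum6, unitvec. simpl. ring. }
      rewrite E. exact Hw.
  - destruct (pfs omega Ha2 Hdw) as [P1 P2].
    assert (E01 : omega [0;1]%nat = (omega [0;2]%nat * omega [1;5]%nat - omega [0;5]%nat * omega [1;2]%nat) / omega [2;5]%nat).
    { field_simplify_eq; auto. lra. }
    assert (E34 : omega [3;4]%nat = (omega [2;4]%nat * omega [3;5]%nat - omega [2;3]%nat * omega [4;5]%nat) / omega [2;5]%nat).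
    { field_simplify_eq; auto. lra. }
    pose proof (detM_nz omega Ha2 Hw Hnd E01) as Hd.
    exists (Qm omega), (Pm omega), (cc omega). split; [|split].
    + split.
      * intros k a Hk Ha. apply QP; auto.
      * intros k ix Hk Hv. apply SE; auto.
    + unfold cc, ww, o. unfold Rdiv. apply Rmult_integral_contrapositive_currified; auto.
      apply Rinv_neq_0_compat; auto.
    + intros ix Hv. apply OM; auto.
Qed.
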